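(* Let $\{a_n\}_{n\ge1}$ and $\{b_n\}_{n\ge1}$ be sequences of complex numbers with $a_n\ne0$ for all $n$, and let $w_n(z)$ ($n\ge0$) be the $n$-th approximant of the continued fraction $$\cfrac{a_1}{z+b_1-\cfrac{a_2}{z+b_2-\cfrac{a_3}{z+b_3-\cdots}}},$$ i.e. $w_0=0$ and $w_n(z)=\cfrac{a_1}{z+b_1-\cfrac{a_2}{\ddots-\cfrac{a_n}{z+b_n}}}$. Then: (1) For every $n\ge0$, $w_n(z)$ is a rational function of degree $n$; for $n\ge1$, $w_n(z)\sim\frac{a_1}{z}$ $(z\to\infty)$ and $w_n(z)-w_{n-1}(z)\sim\frac{a_1a_2\cdots a_n}{z^{2n-1}}$ $(z\to\infty)$. In particular $\{w_n(z)-w_{n-1}(z)\}_{n\ge1}$ is an asymptotic sequence at $\infty$. (2) Let $f(z)$ be a complex-valued function defined on an unbounded subset $\mathfrak X$ of $\mathbb C\cup\{\infty\}$. The following are equivalent: (a) $f(z)\sim \cfrac{a_1}{z+b_1-\cfrac{a_2}{z+b_2-\cfrac{a_3}{z+b_3-\cdots}}}$ $(z\to\infty)_{\mathfrak X}$ (asymptotic continued fraction expansion); (b) for every positive integer $n$ one has $f(z)=\cfrac{a_1}{z+b_1-\cfrac{a_2}{\ddots -\cfrac{a_n}{z+b_n-f_n(z)}}}$ for some function $f_n(z)$ with $f_n(z)\sim\frac{a_{n+1}}{z}$ $(z\to\infty)_{\mathfrak X}$; (c) $f(z)-w_n(z)\sim\frac{a_1a_2\cdots a_{n+1}}{z^{2n+1}}$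 $(z\to\infty)_{\mathfrak X}$ for all $n\ge0$; (d) $f(z)-w_n(z)=O(z^{-(2n+1)})$ $(z\to\infty)_{\mathfrak X}$ for all $n\ge0$; (e) $f(z)-w_n(z)=O(z^{-(2n+1)})$ $(z\to\infty)_{\mathfrak X}$ for infinitely many $n\ge0$; (f) for every $n\ge0$, $w_n(z)$ is the unique rational function $w(z)\in\mathbb C(z)$ of degree at most $n$ such that $f(z)-w(z)=O(z^{-(2n+1)})$ $(z\to\infty)_{\mathfrak X}$; (g) for every $n\ge1$, $w_n(z)$ is the unique Padé approximant of $f(z)$ over $\mathfrak X$ at $z=\infty$ of order $[n-1,n]$. (3) If the equivalent conditions in (2) hold, then the best rational approximations of $f(z)$ over $\mathfrak X$ are precisely the approximants $w_n(z)$, $n\ge0$.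
   Context: All asymptotic relations are as $z\to\infty$ within $\mathfrak X$: $f=O(g)$ if $|f|\le M|g|$ on $U\cap\mathfrak X$ for some punctured neighbourhood $U$ of $\infty$ and some $M>0$; $f=o(g)$ if this holds for every $M>0$; $f\sim g$ if $f-g=o(g)$ and $g-f=o(f)$. A sequence $\{\varphi_n\}$ is an asymptotic sequence if $\varphi_{n+1}=o(\varphi_n)$ for all $n$. Asymptotic continued fraction expansion: $f\sim K$ means $\{w_n-w_{n-1}\}_{n\ge1}$ is an asymptotic sequence and $f-w_n=O(w_{n+1}-w_n)$ for all $n\ge0$ (equivalently $f\sim\sum_{n\ge1}(w_n-w_{n-1})$ as an asymptotic expansion of infinite order). The degree of a rational function is the maximum of the degrees of numerator and denominator in lowest terms. A rational function $w\in\mathbb C(z)$ is a best rational approximation of $f$ over $\mathfrak X$ if $w$ is the unique $v\in\mathbb C(z)$ of degree at most $\deg w$ with $f-v=O(f-w)$ $(z\to\infty)_{\mathfrak X}$. The Padé approximant of $f$ over $\mathfrak X$ at $\infty$ of order $[n-1,n]$ is the unique rational function $g(z)/h(z)$ with $g$ a polynomial of degree $\le n-1$ and $h$ a nonzero polynomial of degree $\le n$ such that $f(z)-g(z)/h(z)=O(z^{-(2n+1)})$ $(z\to\infty)_{\mathfrak X}$. *)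

(* Defs.v *)
(* complex numbers are R[i] (mathcomp-real-closed) over a
   realType R (mathcomp-analysis reals); rational functions are elements of
   the field of fractions {fraction {poly C}}. *)
From HB Require Import structures.
From mathcomp Require Import all_boot all_order all_algebra.
From mathcomp Require Import fraction reals complex.
From Stdlib Require Import ClassicalEpsilon.
Set Implicit Arguments. Unset Strict Implicit. Unset Printing Implicit Defensive.
Import Order.TTheory GRing.Theory Num.Theory.
Local Open Scope ring_scope.

Notation "x %:F" := (@FracField.tofrac _ x) : ring_scope.

Section Asymptotics.
Variable C : numFieldType.

(* Punctured neighbourhoods of infinity are taken to be { z : n < |z| }, n : nat. *)

Definition bigO (X : C -> Prop) (f g : C -> C) : Prop :=
  exists M : C, 0 < M /\ exists N : nat,
    forall z, X z -> N%:R < `|z| -> `|f z| <= M * `|g z|.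

Definition littleo (X : C -> Prop) (f g : C -> C) : Prop :=
  forall M : C, 0 < M -> exists N : nat,
    forall z, X z -> N%:R < `|z| -> `|f z| <= M * `|g z|.

Definition asym (X : C -> Prop) (f g : C -> C) : Prop :=
  littleo X (fun z => f z - g z) g /\ littleo X (fun z => g z - f z) f.

Definition asym_seq1 (X : C -> Prop) (phi : nat -> C -> C) : Prop :=
  forall n, (0 < n)%N -> littleo X (phi n.+1) (phi n).

Definition unbounded (X : C -> Prop) : Prop :=
  forall N : nat, exists z, X z /\ N%:R < `|z|.
End Asymptotics.

Section ContFrac.
Variable F : fieldType.
(* cfr a b k n t x = a_k / (x + b_k - a_(k+1) / ( ... - a_(k+n-1)/(x + b_(k+n-1) - t)))
   (n levels; cfr a b k 0 t x = t).  Division is MathComp's total division. *)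
Fixpoint cfr (a b : nat -> F) (k n : nat) (t x : F) : F :=
  match n with
  | 0 => t
  | n'.+1 => a k / (x + b k - cfr a b k.+1 n' t x)
  end.
End ContFrac.

Section RatFun.
Variable C : fieldType.
Local Notation RF := {fraction {poly C}}.

Definition lowest_rep (r : RF) (pq : {poly C} * {poly C}) : Prop :=
  pq.2 != 0 /\ coprimep pq.1 pq.2 /\ r = pq.1%:F / pq.2%:F.

Definition lrep (r : RF) : {poly C} * {poly C} :=
  epsilon (inhabits (0, 1)) (lowest_rep r).

Definition rdeg (r : RF) : nat :=
  (maxn (size (lrep r).1) (size (lrep r).2)).-1.

(* the rational function r as a function C -> C (value 0 at poles) *)
Definition reval (r : RF) (z : C) : C := (lrep r).1.[z] / (lrep r).2.[z].

Definition approx (a b : nat -> C) (n : nat) : RF :=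
  cfr (fun k => (a k)%:P%:F) (fun k => (b k)%:P%:F) 1 n 0 ('X)%:F.
End RatFun.

Section Statements.
Variable C : numFieldType.
Local Notation RF := {fraction {poly C}}.
Implicit Types (X : C -> Prop) (f : C -> C) (a b : nat -> C).

Definition w a b n : C -> C := reval (approx a b n).

Definition acf_expansion X f a b : Prop :=
  asym_seq1 X (fun n z => w a b n z - w a b n.-1 z) /\
  forall n, bigO X (fun z => f z - w a b n z) (fun z => w a b n.+1 z - w a b n z).

Definition pade_cond X f n (g h : {poly C}) : Prop :=
  [/\ h != 0, (size g <= n)%N, (size h <= n.+1)%N &
      bigO X (fun z => f z - g.[z] / h.[z]) (fun z => (z ^+ (2 * n).+1)^-1)].

Definition is_pade X f n (r : RF) : Prop :=
  (exists g h, pade_cond X f n g h /\ r = g%:F / h%:F) /\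
  (forall g h, pade_cond X f n g h -> g%:F / h%:F = r).

Definition best_approx X f (r : RF) : Prop :=
  forall v : RF, (rdeg v <= rdeg r)%N ->
    bigO X (fun z => f z - reval v z) (fun z => f z - reval r z) -> v = r.
End Statements.

(* Main.v *)
Require Import Defs.
From HB Require Import structures.
From mathcomp Require Import all_boot all_order all_algebra.
From mathcomp Require Import fraction generic_quotient reals complex ring zify.
From Stdlib Require Import ClassicalEpsilon.
Set Implicit Arguments. Unset Strict Implicit. Unset Printing Implicit Defensive.
Import Order.TTheory GRing.Theory Num.Theory.
Local Open Scope ring_scope.

Section Asy.
Variable C : numFieldType.
Variable archi : forall x : C, exists n : nat, `|x| < n%:R.
Implicit Types (X : C -> Prop) (f g h : C -> C).

Definition ev X (P : C -> Prop) := exists N : nat, forall z, X z -> N%:R < `|z| -> P z.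

Lemma maxlt (N1 N2 : nat) (x : C) : (maxn N1 N2)%:R < x -> N1%:R < x /\ N2%:R < x.
Proof.
move=> h; split; apply: le_lt_trans h; rewrite ler_nat; [exact: leq_maxl | exact: leq_maxr].
Qed.

Lemma evI X (P Q : C -> Prop) : ev X P -> ev X Q -> ev X (fun z => P z /\ Q z).
Proof.
move=> [N1 h1] [N2 h2]; exists (maxn N1 N2) => z Xz /maxlt [z1 z2]; split; [exact: h1|exact: h2].
Qed.

Lemma evW X (P Q : C -> Prop) : (forall z, X z -> P z -> Q z) -> ev X P -> ev X Q.
Proof. by move=> hPQ [N h]; exists N => z Xz hz; apply: hPQ => //; apply: h. Qed.

Lemma ev_gt X (c : C) : ev X (fun z => `|c| < `|z|).
Proof. have [n hn] := archi c; exists n => z _ hz; exact: lt_trans hz. Qed.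

Lemma ev_sub X (P : C -> Prop) : ev (fun _ => True) P -> ev X P.
Proof. by move=> [N h]; exists N => z _; apply: h. Qed.

Lemma ev_nz X : ev X (fun z => z != 0).
Proof. by exists 0%N => z _; rewrite normr_gt0. Qed.

Lemma ev_ge1 X : ev X (fun z => 1 <= `|z|).
Proof. by exists 1%N => z _ /ltW. Qed.

Lemma bigO_trans X f g h : bigO X f g -> bigO X g h -> bigO X f h.
Proof.
move=> [M1 [M10 h1]] [M2 [M20 h2]]; exists (M1 * M2); split; first exact: mulr_gt0.
apply: evW (evI h1 h2) => z _ [e1 e2]; rewrite -mulrA; apply: le_trans e1 _.
by rewrite ler_wpM2l // ltW.
Qed.

Lemma bigO_ev X f g : ev X (fun z => f z = g z) -> bigO X f g.
Proof.
move=> h; exists 1; split; first exact: ltr01.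
by apply: evW h => z _ ->; rewrite mul1r.
Qed.

Lemma bigO_refl X f : bigO X f f.
Proof. by apply: bigO_ev; exists 0%N. Qed.

Lemma bigO_le X f g (c : C) : 0 < c -> ev X (fun z => `|f z| <= c * `|g z|) -> bigO X f g.
Proof. by move=> c0 h; exists c. Qed.

Lemma bigO_sub X f g : bigO (fun _ => True) f g -> bigO X f g.
Proof. by move=> [M [M0 h]]; exists M; split => //; apply: ev_sub. Qed.

Lemma littleo_sub X f g : littleo (fun _ => True) f g -> littleo X f g.
Proof. by move=> h M M0; apply: ev_sub; apply: h. Qed.

Lemma bigOD X f g h : bigO X f h -> bigO X g h -> bigO X (fun z => f z + g z) h.
Proof.
move=> [M1 [M10 h1]] [M2 [M20 h2]]; exists (M1 + M2); split; first exact: addr_gt0.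
apply: evW (evI h1 h2) => z _ [e1 e2]; apply: le_trans (ler_normD _ _) _.
by rewrite mulrDl lerD.
Qed.

Lemma bigON X f h : bigO X f h -> bigO X (fun z => - f z) h.
Proof. by move=> [M [M0 h1]]; exists M; split => //; apply: evW h1 => z _; rewrite normrN. Qed.

Lemma bigOB X f g h : bigO X f h -> bigO X g h -> bigO X (fun z => f z - g z) h.
Proof. by move=> h1 h2; apply: bigOD => //; apply: bigON. Qed.

Lemma bigO_norm X f f' g : (forall z, `|f' z| = `|f z|) -> bigO X f g -> bigO X f' g.
Proof. by move=> e [M [M0 h1]]; exists M; split => //; apply: evW h1 => z _; rewrite e. Qed.

Lemma littleo_norm X f f' g : (forall z, `|f' z| = `|f z|) -> littleo X f g -> littleo X f' g.
Proof. by move=> e h1 M M0; apply: evW (h1 M M0) => z _; rewrite e. Qed.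

Lemma littleo_bigO X f g h : littleo X f g -> bigO X g h -> littleo X f h.
Proof.
move=> h1 [M2 [M20 h2]] e e0.
apply: evW (evI (h1 (e / M2) (divr_gt0 e0 M20)) h2) => z _ [e1 e2].
apply: le_trans e1 _; apply: le_trans (ler_wpM2l _ e2) _; first by rewrite ltW // divr_gt0.
by rewrite mulrA divfK // lt0r_neq0.
Qed.

Lemma bigO_littleo X f g h : bigO X f g -> littleo X g h -> littleo X f h.
Proof.
move=> [M1 [M10 h1]] h2 e e0.
apply: evW (evI h1 (h2 (e / M1) (divr_gt0 e0 M10))) => z _ [e1 e2].
apply: le_trans e1 _; apply: le_trans (ler_wpM2l (ltW M10) e2) _.
by rewrite mulrA mulrCA divff ?mulr1 // lt0r_neq0.
Qed.

Lemma littleoD X f g h : littleo X f h -> littleo X g h -> littleo X (fun z => f z + g z) h.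
Proof.
move=> h1 h2 e e0; have e2 : 0 < e / 2 by rewrite divr_gt0 ?ltr0n.
apply: evW (evI (h1 _ e2) (h2 _ e2)) => z _ [e1 e3].
apply: le_trans (ler_normD _ _) _.
by rewrite [e in e * _]splitr mulrDl lerD.
Qed.

Lemma littleoN X f h : littleo X f h -> littleo X (fun z => - f z) h.
Proof. by apply: littleo_norm => z; rewrite normrN. Qed.

Lemma littleoB X f g h : littleo X f h -> littleo X g h -> littleo X (fun z => f z - g z) h.
Proof. by move=> h1 h2; apply: littleoD => //; apply: littleoN. Qed.

Lemma littleo_bigO' X f g : littleo X f g -> bigO X f g.
Proof. by move=> h; exists 1; split; [exact: ltr01 | exact: h ltr01]. Qed.

Lemma littleoM X f1 g1 f2 g2 : littleo X f1 g1 -> bigO X f2 g2 ->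
  littleo X (fun z => f1 z * f2 z) (fun z => g1 z * g2 z).
Proof.
move=> h1 [M [M0 h2]] e e0.
apply: evW (evI (h1 (e / M) (divr_gt0 e0 M0)) h2) => z _ [e1 e2].
rewrite !normrM.
have := ler_pM (normr_ge0 _) (normr_ge0 _) e1 e2.
move/le_trans; apply; rewrite mulrACA divfK ?lt0r_neq0 //.
Qed.

Lemma bigOM X f1 g1 f2 g2 : bigO X f1 g1 -> bigO X f2 g2 ->
  bigO X (fun z => f1 z * f2 z) (fun z => g1 z * g2 z).
Proof.
move=> [M1 [M10 h1]] [M [M0 h2]]; exists (M1 * M); split; first exact: mulr_gt0.
apply: evW (evI h1 h2) => z _ [e1 e2].
rewrite !normrM.
have := ler_pM (normr_ge0 _) (normr_ge0 _) e1 e2.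
by move/le_trans; apply; rewrite mulrACA.
Qed.


Lemma littleo_normr X f g g' : (forall z, `|g' z| = `|g z|) -> littleo X f g -> littleo X f g'.
Proof. by move=> e h1 M M0; apply: evW (h1 M M0) => z _; rewrite e. Qed.

Lemma bigO_normr X f g g' : (forall z, `|g' z| = `|g z|) -> bigO X f g -> bigO X f g'.
Proof. by move=> e [M [M0 h1]]; exists M; split => //; apply: evW h1 => z _; rewrite e. Qed.

Lemma half_le (x y : C) : `|x - y| <= 2^-1 * `|y| -> `|y| <= 2 * `|x|.
Proof.
move=> h.
have e : y = x - (x - y) by ring.
have h1 : `|y| <= `|x| + 2^-1 * `|y|.
  rewrite {1}e; apply: le_trans (ler_normB _ _) _; by rewrite lerD2l.
have h2 : `|y| / 2 <= `|x|.
  by rewrite [2^-1 * _]mulrC in h1; rewrite -(lerD2r (`|y| / 2)) -splitr.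
by rewrite -ler_pdivrMl ?ltr0n // mulrC.
Qed.

Lemma asym_of X f g : littleo X (fun z => f z - g z) g -> asym X f g.
Proof.
move=> h; split => //; apply: littleo_bigO (littleo_norm _ h) _.
  by move=> z; rewrite distrC.
exists 2; split; first by rewrite ltr0n.
apply: evW (h 2^-1 _) => [z _|]; first exact: half_le.
by rewrite invr_gt0 ltr0n.
Qed.

Lemma asym_bigO X f g : asym X f g -> bigO X f g.
Proof.
move=> [_ h]; exists 2; split; first by rewrite ltr0n.
apply: evW (h 2^-1 _) => [z _|]; first exact: half_le.
by rewrite invr_gt0 ltr0n.
Qed.

Lemma asym_sym X f g : asym X f g -> asym X g f.
Proof. by case. Qed.

Lemma asym_evq X f g : ev X (fun z => f z = g z) -> asym X f g.
Proof.
move=> h; apply: asym_of => M M0; apply: evW h => z _ ->.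
by rewrite subrr normr0 mulr_ge0 // ltW.
Qed.

Lemma asym_refl X f : asym X f f.
Proof. by apply: asym_evq; exists 0%N. Qed.

Lemma asym_trans X f g h : asym X f g -> asym X g h -> asym X f h.
Proof.
move=> h1 h2; apply: asym_of.
apply: littleo_norm (littleoD (littleo_bigO h1.1 (asym_bigO h2)) h2.1).
by move=> z; congr (`|_|); ring.
Qed.

Lemma asym_ev X f f' g g' : asym X f g -> ev X (fun z => f z = f' z) ->
  ev X (fun z => g z = g' z) -> asym X f' g'.
Proof.
move=> h e1 e2; apply: asym_trans (asym_trans (asym_sym (asym_evq e1)) h) (asym_evq e2).
Qed.

Lemma asym_sub X f g : asym (fun _ => True) f g -> asym X f g.
Proof. by case=> h1 h2; split; apply: littleo_sub. Qed.

Lemma asym_mul X f1 g1 f2 g2 : asym X f1 g1 -> asym X f2 g2 ->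
  asym X (fun z => f1 z * f2 z) (fun z => g1 z * g2 z).
Proof.
move=> h1 h2; apply: asym_of.
have A := littleoM h1.1 (asym_bigO h2).
have B := littleoM h2.1 (bigO_refl X g1).
have B' : littleo X (fun z => g1 z * (f2 z - g2 z)) (fun z => g1 z * g2 z).
  by apply: littleo_normr (littleo_norm _ B) => z; rewrite mulrC.
apply: littleo_norm (littleoD A B').
by move=> z; congr (`|_|); ring.
Qed.

Lemma asym_addo X f g h : asym X f g -> littleo X h g -> asym X (fun z => f z + h z) g.
Proof.
move=> h1 h2; apply: asym_of; apply: littleo_norm (littleoD h1.1 h2).
by move=> z; congr (`|_|); ring.
Qed.

Lemma asym_nz X f g : asym X f g -> ev X (fun z => g z != 0) -> ev X (fun z => f z != 0).
Proof.
move=> [_ h] e; apply: evW (evI e (h 2^-1 _)) => [z _ [gz hz]|]; last by rewrite invr_gt0 ltr0n.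
apply/negP => /eqP fz; move: hz; rewrite fz subr0 normr0 mulr0.
rewrite normr_le0; exact/negP.
Qed.

Lemma inv_bound (x y e : C) : 0 < e -> `|x - y| <= 2^-1 * `|y| ->
  `|x - y| <= e / 2 * `|y| -> `|x^-1 - y^-1| <= e * `|y^-1|.
Proof.
move=> e0; have [->|y0] := eqVneq y 0 => h1 h2.
  by move: h1; rewrite subr0 normr0 mulr0 normr_le0 => /eqP ->; rewrite invr0 subr0 normr0 mulr0.
have hy := half_le h1.
have x0 : x != 0.
  apply/negP => /eqP x0; move: hy; by rewrite x0 normr0 mulr0 normr_le0 (negbTE y0).
have -> : x^-1 - y^-1 = (y - x) * x^-1 * y^-1 by field; rewrite y0 x0.
rewrite !normrM !normfV.
have nx : 0 < `|x| by rewrite normr_gt0.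
have ny : 0 < `|y| by rewrite normr_gt0.
have hxi : `|x|^-1 <= 2 * `|y|^-1.
  rewrite -(ler_pM2r nx) mulVf ?lt0r_neq0 // mulrAC.
  by rewrite ler_pdivlMr // mul1r.
rewrite distrC.
have ix : 0 <= `|x|^-1 by rewrite invr_ge0 ltW.
have iy : 0 <= `|y|^-1 by rewrite invr_ge0 ltW.
apply: le_trans (ler_wpM2r iy (ler_wpM2r ix h2)) _.
have -> : e / 2 * `|y| * `|x|^-1 * `|y|^-1 = e / 2 * `|x|^-1.
  by field; rewrite !lt0r_neq0.
apply: le_trans (ler_wpM2l _ hxi) _; first by rewrite ltW // divr_gt0 ?ltr0n.
by rewrite mulrA divfK ?pnatr_eq0.
Qed.

Lemma asym_inv X f g : asym X f g -> asym X (fun z => (f z)^-1) (fun z => (g z)^-1).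
Proof.
move=> [h _]; apply: asym_of => e e0.
have e2 : 0 < e / 2 by rewrite divr_gt0 ?ltr0n.
apply: evW (evI (h _ e2) (h 2^-1 _)) => [z _ [hz1 hz2]|]; last by rewrite invr_gt0 ltr0n.
exact: inv_bound.
Qed.

Lemma asym_cst X f g c : asym X f g -> asym X (fun z => c * f z) (fun z => c * g z).
Proof. by move=> h; apply: (asym_mul (asym_refl X (fun _ => c)) h). Qed.

End Asy.

Section Pow.
Variable C : numFieldType.
Variable archi : forall x : C, exists n : nat, `|x| < n%:R.
Implicit Types (X : C -> Prop) (f g h : C -> C).

Lemma littleo_cst X (c : C) : littleo X (fun _ => c) (fun z => z).
Proof.
move=> e e0; apply: evW (ev_gt archi X (c / e)) => z _ hz.
rewrite normrM normfV (gtr0_norm e0) ltr_pdivrMr // in hz.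
by rewrite mulrC ltW.
Qed.

Lemma littleo_invz X : littleo X (fun z => z^-1) (fun _ => 1).
Proof.
move=> e e0; apply: evW (evI (ev_gt archi X (e^-1)) (ev_nz X)) => z _ [hz z0].
have nz : 0 < `|z| by rewrite normr_gt0.
have ie : 0 < e^-1 by rewrite invr_gt0.
rewrite normfV (gtr0_norm e0) in hz.
rewrite normfV normr1 mulr1 -[`|z|^-1]mul1r ler_pdivrMr //.
by rewrite -[e^-1]mulr1 ltr_pdivrMl // in hz; apply: ltW.
Qed.

Lemma bigO_invz1 X : bigO X (fun z => z^-1) (fun _ => 1).
Proof.
apply: (bigO_le ltr01); apply: evW (ev_ge1 X) => z _ hz.
rewrite normfV normr1 mul1r invf_le1 //; exact: lt_le_trans ltr01 hz.
Qed.

Lemma bigO_pow X k j : (k <= j)%N -> bigO X (fun z => (z ^+ j)^-1) (fun z => (z ^+ k)^-1).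
Proof.
move=> kj; apply: (bigO_le ltr01); apply: evW (ev_ge1 X) => z _ hz.
have nz : 0 < `|z| by exact: lt_le_trans ltr01 hz.
rewrite mul1r !normfV !normrX lef_pV2 ?posrE ?exprn_gt0 //.
exact: ler_weXn2l.
Qed.

Lemma littleo_pow X k j : (k < j)%N -> littleo X (fun z => (z ^+ j)^-1) (fun z => (z ^+ k)^-1).
Proof.
case: j => // j kj.
have H := littleoM (littleo_invz X) (bigO_pow X (kj : (k <= j)%N)).
apply: (littleo_normr _ (littleo_norm _ H)) => z /=; first by rewrite mul1r.
by rewrite exprS invfM.
Qed.

Lemma bigO_cpow X c k : bigO X (fun z => c / z ^+ k) (fun z => (z ^+ k)^-1).
Proof.
apply: (@bigO_le _ _ _ _ (`|c| + 1)); first exact: ltr_wpDl (normr_ge0 c) ltr01.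
by exists 0%N => z _ _; rewrite normrM ler_wpM2r // lerDl ler01.
Qed.

Lemma bigO_powc X c k : c != 0 -> bigO X (fun z => (z ^+ k)^-1) (fun z => c / z ^+ k).
Proof.
move=> c0; apply: (@bigO_le _ _ _ _ (`|c|^-1)); first by rewrite invr_gt0 normr_gt0.
by exists 0%N => z _ _; rewrite normrM mulrA mulVf ?mul1r // normr_eq0.
Qed.

Lemma u_asym X b1 g : bigO X g (fun z => z^-1) -> asym X (fun z => z + b1 - g z) (fun z => z).
Proof.
move=> hg; apply: asym_of.
have h1 := littleo_cst X b1.
have h2 := bigO_littleo (bigO_trans hg (bigO_invz1 X)) (littleo_cst X 1).
apply: littleo_norm (littleoB h1 h2) => z; congr (`|_|); ring.
Qed.

Lemma step X (a1 b1 k0 : C) (k : nat) g h :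
  bigO X g (fun z => z^-1) -> bigO X h (fun z => z^-1) ->
  asym X (fun z => g z - h z) (fun z => k0 / z ^+ k) ->
  asym X (fun z => a1 / (z + b1 - g z) - a1 / (z + b1 - h z)) (fun z => a1 * k0 / z ^+ k.+2).
Proof.
move=> hg hh hgh.
have hu := u_asym b1 hg; have hv := u_asym b1 hh.
have nu := asym_nz hu (ev_nz X); have nv := asym_nz hv (ev_nz X).
have A := asym_mul (asym_cst a1 hgh) (asym_mul (asym_inv hu) (asym_inv hv)).
apply: asym_ev A _ _.
  apply: evW (evI nu nv) => z _ [u0 v0] /=.
  by field; rewrite u0 v0.
by exists 0%N => z _ _ /=; rewrite !exprS !invfM; ring.
Qed.

End Pow.

Lemma cfr_shift (F : fieldType) (a b : nat -> F) k n t x :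
  cfr a b k.+1 n t x = cfr (fun i => a i.+1) (fun i => b i.+1) k n t x.
Proof. by elim: n k => //= n IH k; rewrite IH. Qed.

Definition sh (T : Type) (a : nat -> T) := fun i => a i.+1.

Lemma cfS (F : fieldType) (a b : nat -> F) n t x :
  cfr a b 1 n.+1 t x = a 1%N / (x + b 1%N - cfr (sh a) (sh b) 1 n t x).
Proof. by rewrite /= cfr_shift. Qed.

Section CF.
Variable C : numFieldType.
Variable archi : forall x : C, exists n : nat, `|x| < n%:R.
Implicit Types (X : C -> Prop) (f g h : C -> C) (a b : nat -> C).

Definition cf a b n := fun z : C => cfr a b 1 n 0 z.
Definition piA a n := \prod_(1 <= i < n.+1) a i.

Lemma piS a n : piA a n.+1 = a 1%N * piA (sh a) n.
Proof. by rewrite /piA big_nat_recl. Qed.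

Lemma pi1 a : piA a 1 = a 1%N.
Proof. by rewrite /piA big_nat1. Qed.

Lemma pi_neq0 a n : (forall k, (0 < k)%N -> a k != 0) -> piA a n != 0.
Proof.
move=> ha; rewrite /piA prodf_seq_neq0; apply/allP => i; rewrite mem_index_iota => /andP[i1 _].
exact: ha.
Qed.

Lemma small n : forall a b, bigO (fun _ => True) (cf a b n) (fun z => z^-1).
Proof.
elim: n => [|n IH] a b.
  apply: (bigO_le ltr01); exists 0%N => z _ _; by rewrite /cf /= normr0 mul1r normr_ge0.
have h := asym_cst (a 1%N) (asym_inv (u_asym archi (b 1%N) (IH (sh a) (sh b)))).
apply: bigO_trans (bigO_trans _ (asym_bigO h)) (bigO_cpow _ (a 1%N) 1).
by apply: bigO_ev; exists 0%N => z _ _; rewrite /cf cfS.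
Qed.

Lemma asym1 n a b : asym (fun _ => True) (cf a b n.+1) (fun z => a 1%N / z).
Proof.
have h := asym_cst (a 1%N) (asym_inv (u_asym archi (b 1%N) (small n (sh a) (sh b)))).
apply: asym_ev h _ _; exists 0%N => z _ _ //.
by rewrite /cf cfS.
Qed.

Lemma diff n : forall a b, asym (fun _ => True) (fun z => cf a b n.+1 z - cf a b n z)
  (fun z => piA a n.+1 / z ^+ (2 * n).+1).
Proof.
elim: n => [|n IH] a b.
  apply: asym_ev (asym1 0 a b) _ _; exists 0%N => z _ _ /=.
    by rewrite /cf /= !subr0.
  by rewrite /piA big_nat1 expr1.
have h := step archi (a 1%N) (b 1%N) (small n.+1 (sh a) (sh b)) (small n (sh a) (sh b)) (IH (sh a) (sh b)).
apply: asym_ev h _ _; exists 0%N => z _ _ /=.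
  by rewrite /cf !cfS.
have -> : (2 * n.+1).+1 = (2 * n).+3 by lia.
by rewrite [piA a _]piS.
Qed.


Lemma bigO_cf_small X g k0 k : (0 < k)%N ->
  asym X g (fun z => k0 / z ^+ k) -> bigO X g (fun z => z^-1).
Proof.
move=> k0' h; apply: bigO_trans (asym_bigO h) (bigO_trans (bigO_cpow _ k0 k) _).
exact: (bigO_pow X k0').
Qed.

Lemma b_to_c n : forall a b X f t, (forall z, X z -> f z = cfr a b 1 n (t z) z) ->
  asym X t (fun z => a n.+1 / z) ->
  asym X (fun z => f z - cf a b n z) (fun z => piA a n.+1 / z ^+ (2 * n).+1).
Proof.
elim: n => [|n IH] a b X f t hf ht.
  apply: asym_ev ht _ _; exists 0%N => z Xz _ /=.
    by rewrite hf // /cf /= subr0.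
  by rewrite /piA big_nat1 expr1.
pose g z := cfr (sh a) (sh b) 1 n (t z) z.
have hg := IH (sh a) (sh b) X g t (fun z _ => erefl) ht.
have sg : bigO X g (fun z => z^-1).
  have e : forall z, g z = (g z - cf (sh a) (sh b) n z) + cf (sh a) (sh b) n z.
    by move=> z; rewrite subrK.
  apply: bigO_trans (bigO_ev _) (bigOD (bigO_cf_small _ hg) (bigO_sub _ (small n (sh a) (sh b)))) => //.
  by exists 0%N => z _ _; rewrite -e.
have h := step archi (a 1%N) (b 1%N) sg (bigO_sub X (small n (sh a) (sh b))) hg.
apply: asym_ev h _ _; exists 0%N => z Xz _ /=.
  by rewrite hf // /cf !cfS.
have -> : (2 * n.+1).+1 = (2 * n).+3 by lia.
by rewrite [piA a _]piS.
Qed.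

Lemma c_to_b n : forall a b X f, (forall k, (0 < k)%N -> a k != 0) ->
  (forall m, asym X (fun z => f z - cf a b m z) (fun z => piA a m.+1 / z ^+ (2 * m).+1)) ->
  exists t, (forall z, X z -> f z = cfr a b 1 n (t z) z) /\ asym X t (fun z => a n.+1 / z).
Proof.
elim: n => [|n IH] a b X f ha hm.
  exists f; split => //.
  apply: asym_ev (hm 0%N) _ _; exists 0%N => z _ _ /=.
    by rewrite /cf /= subr0.
  by rewrite /piA big_nat1 expr1.
have a10 : a 1%N != 0 by exact: ha.
have hf : asym X f (fun z => a 1%N / z).
  apply: asym_ev (hm 0%N) _ _; exists 0%N => z _ _ /=.
    by rewrite /cf /= subr0.
  by rewrite /piA big_nat1 expr1.
have nf : ev X (fun z => f z != 0).
  apply: asym_nz hf _; apply: evW (ev_nz X) => z _ z0.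
  by rewrite mulf_neq0 // invr_eq0.
have hu : asym X (fun z => a 1%N * (f z)^-1) (fun z => z).
  apply: asym_ev (asym_cst (a 1%N) (asym_inv hf)) _ _; first by exists 0%N.
  by apply: evW (ev_nz X) => z _ z0; field; rewrite z0 a10.
pose g z := z + b 1%N - a 1%N / f z.
have hg : forall m, asym X (fun z => g z - cf (sh a) (sh b) m z)
                      (fun z => piA (sh a) m.+1 / z ^+ (2 * m).+1).
  move=> m.
  have hv := u_asym archi (b 1%N) (bigO_sub X (small m (sh a) (sh b))).
  have nv := asym_nz hv (ev_nz X).
  have H := asym_cst (a 1%N)^-1 (asym_mul (asym_mul (hm m.+1) hu) hv).
  apply: asym_ev H _ _.
    apply: evW (evI (evI nf nv) (ev_nz X)) => z _ [[f0 v0] z0] /=.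
    rewrite /cf cfS /g -/(cf (sh a) (sh b) m z).
    by field; rewrite f0 v0 a10.
  apply: evW (ev_nz X) => z _ z0 /=.
  have -> : (2 * m.+1).+1 = (2 * m).+3 by lia.
  rewrite [piA a _]piS !exprS.
  by field; rewrite expf_neq0 // z0 a10.
have ha' : forall k, (0 < k)%N -> sh a k != 0 by move=> k _; exact: ha.
have [t [ht1 ht2]] := IH (sh a) (sh b) X g ha' hg.
exists t; split => // z Xz.
rewrite cfS -ht1 // /g.
have -> : z + b 1%N - (z + b 1%N - a 1%N / f z) = a 1%N / f z by ring.
by rewrite invfM invrK mulrA divff // mul1r.
Qed.

End CF.

Local Open Scope quotient_scope.

Lemma frac_rep (R : idomainType) (x : {fraction R}) : exists n d, d != 0 /\ x = n%:F / d%:F.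
Proof.
elim/quotW: x => r.
exists (\n_r), (\d_r); split; first exact: denom_ratioP.
have hd : (\d_r)%:F != 0 by rewrite tofrac_eq0 denom_ratioP.
apply: (mulIf hd); rewrite divfK //.
rewrite /FracField.tofrac -lock.
rewrite -[_ * _]FracField.pi_mul.
apply/eqmodP => /=. rewrite FracField.equivfE.
rewrite /FracField.mulf.
rewrite !numden_Ratio ?mul1r ?mulr1 ?denom_ratioP ?oner_neq0 ?mulf_neq0 //.
by rewrite mulrC.
Qed.

Local Close Scope quotient_scope.

Section Poly.
Variable C : fieldType.
Local Notation RF := {fraction {poly C}}.

Lemma frac_eq (p q N D : {poly C}) : q != 0 -> D != 0 ->
  (p%:F / q%:F = N%:F / D%:F :> RF) <-> p * D = N * q.
Proof.
move=> q0 D0; split.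
  move/eqP; rewrite eqr_div ?tofrac_eq0 // -!tofracM tofrac_eq; exact/eqP.
by move=> e; apply/eqP; rewrite eqr_div ?tofrac_eq0 // -!tofracM e.
Qed.

Lemma lrepP (r : RF) : lowest_rep r (lrep r).
Proof.
rewrite /lrep; apply: epsilon_spec.
have [n [d [d0 ->]]] := frac_rep r.
set g := gcdp n d.
have g0 : g != 0 by rewrite gcdp_eq0 negb_and d0 orbT.
have hn : n %/ g * g = n by rewrite divpK // dvdp_gcdl.
have hd : d %/ g * g = d by rewrite divpK // dvdp_gcdr.
have q0 : d %/ g != 0 by apply: contraNneq d0 => e; rewrite -hd e mul0r.
exists (n %/ g, d %/ g); split => //=; split.
  by apply: coprimep_div_gcd; rewrite d0 orbT.
apply/frac_eq => //.
by rewrite -[d in RHS]hd -[n in LHS]hn mulrAC mulrA.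
Qed.

Lemma lowest_size (r : RF) p q p' q' : lowest_rep r (p, q) -> lowest_rep r (p', q') ->
  size p = size p' /\ size q = size q'.
Proof.
move=> [/= q0 [c1 e1]] [/= q0' [c2 e2]].
have e : p * q' = p' * q by apply/frac_eq => //; rewrite -e1 -e2.
have hq : q %= q'.
  apply/andP; split.
    rewrite coprimep_sym in c1; rewrite -(Gauss_dvdpr _ c1) e; exact: dvdp_mulIr.
  rewrite coprimep_sym in c2; rewrite -(Gauss_dvdpr _ c2) -e; exact: dvdp_mulIr.
have sq := eqp_size hq; split => //.
move: e; have [->|p0] := eqVneq p 0 => e.
  by move: e; rewrite mul0r => /esym/eqP; rewrite mulf_eq0 (negbTE q0) orbF => /eqP ->.
have p0' : p' != 0.
  by apply: contraNneq (mulf_neq0 p0 q0') => p0'; rewrite e p0' mul0r.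
have := congr1 (fun x : {poly C} => size x) e; rewrite /= !size_mul // sq.
have : (0 < size q')%N by rewrite size_poly_gt0.
move=> h1 h2; have := congr1 S h2; rewrite !prednK ?addn_gt0 ?h1 ?orbT //.
by move/addIn.
Qed.

End Poly.

Section Growth.
Variable C : numFieldType.
Variable archi : forall x : C, exists n : nat, `|x| < n%:R.
Local Notation RF := {fraction {poly C}}.
Implicit Types (X : C -> Prop) (f g h : C -> C).

Lemma growth (p : {poly C}) : p != 0 ->
  asym (fun _ => True) (fun z => p.[z]) (fun z => lead_coef p * z ^+ (size p).-1).
Proof.
elim/poly_ind: p => [|p c IH]; first by rewrite eqxx.
move=> nz.
have [p0|p0] := eqVneq p 0.
  move: nz; rewrite p0 mul0r add0r => c0.
  apply: asym_evq; exists 0%N => z _ _.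
  by rewrite hornerC lead_coefC size_polyC; move: c0; rewrite polyC_eq0 => /negbTE ->; rewrite expr0 mulr1.
have IH' := IH p0.
have sp : size (p * 'X + c%:P) = (size p).+1 by rewrite size_MXaddC (negbTE p0).
have lp : lead_coef (p * 'X + c%:P) = lead_coef p.
  rewrite lead_coefDl ?lead_coefMX // size_mulX //.
  apply: leq_ltn_trans (size_polyC_leq1 c) _; by rewrite ltnS size_poly_gt0.
rewrite sp lp.
have s1 : (0 < size p)%N by rewrite size_poly_gt0.
set e := (size p).-1 in IH' *.
have -> : (size p).+1.-1 = e.+1 by rewrite /e prednK.
have lp0 : lead_coef p != 0 by rewrite lead_coef_eq0.
have H := asym_mul IH' (asym_refl _ (fun z => z)).
have Hc : littleo (fun _ => True) (fun _ => c) (fun z => lead_coef p * z ^+ e * z).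
  apply: littleo_bigO (littleo_cst archi _ c) _.
  apply: (bigO_le (c := `|lead_coef p|^-1)); first by rewrite invr_gt0 normr_gt0.
  apply: evW (ev_ge1 _) => z _ z1.
  rewrite !normrM normrX !mulrA mulVf ?normr_eq0 // mul1r.
  by rewrite ler_peMl // exprn_ege1.
apply: asym_ev (asym_addo H Hc) _ _; exists 0%N => z _ _ //=.
  by rewrite hornerMXaddC.
by rewrite exprSr mulrA.
Qed.

Lemma root_ev X (p : {poly C}) : p != 0 -> ev X (fun z => p.[z] != 0).
Proof.
move=> p0; apply: ev_sub; apply: asym_nz (growth p0) _.
apply: evW (ev_nz _) => z _ z0.
by rewrite mulf_neq0 ?lead_coef_eq0 // expf_neq0.
Qed.

Lemma reval_ev X (r : RF) (N D : {poly C}) : D != 0 -> r = N%:F / D%:F ->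
  ev X (fun z => reval r z = N.[z] / D.[z]).
Proof.
move=> D0 er.
have [q0 [_ e1]] := lrepP r.
have e : (lrep r).1 * D = N * (lrep r).2 by apply/frac_eq => //; rewrite -e1 -er.
apply: evW (evI (root_ev X q0) (root_ev X D0)) => z _ [qz Dz].
by rewrite /reval; apply/eqP; rewrite eqr_div // -!hornerM e.
Qed.

End Growth.

Lemma frac_step (F : fieldType) (A x n d : F) : d != 0 -> A / (x - n / d) = A * d / (x * d - n).
Proof. by move=> d0; rewrite -{1}(mulfK d0 x) -mulrBl invf_div mulrA. Qed.

Section Approx.
Variable C : numFieldType.
Variable archi : forall x : C, exists n : nat, `|x| < n%:R.
Local Notation RF := {fraction {poly C}}.
Implicit Types (X : C -> Prop) (f g h : C -> C) (a b : nat -> C).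

Lemma approxS a b n : approx a b n.+1 =
  (a 1%N)%:P%:F / ('X%:F + (b 1%N)%:P%:F - approx (sh a) (sh b) n) :> RF.
Proof. by rewrite /approx cfS. Qed.

Lemma polyrep n : forall a b, (forall k, (0 < k)%N -> a k != 0) ->
  exists N D : {poly C}, D != 0 /\ size D = n.+1 /\ (size N <= n)%N /\ coprimep N D /\
    approx a b n = N%:F / D%:F /\ ev (fun _ => True) (fun z => cf a b n z = N.[z] / D.[z]).
Proof.
elim: n => [|n IH] a b ha.
  exists 0, 1; split; first by rewrite oner_neq0.
  split; first by rewrite size_poly1.
  split; first by rewrite size_poly0.
  split; first by rewrite coprimep1.
  split; first by rewrite /approx /= tofrac0 mul0r.
  by exists 0%N => z _ _; rewrite /cf /= horner0 mul0r.
have ha' : forall k, (0 < k)%N -> sh a k != 0 by move=> k _; exact: ha.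
have [N' [D' [D0 [sD [sN [cND [eA ev']]]]]]] := IH (sh a) (sh b) ha'.
have a10 : a 1%N != 0 by exact: ha.
pose D := ('X + (b 1%N)%:P) * D' - N'.
have sD1 : size (('X + (b 1%N)%:P) * D') = n.+2.
  by rewrite size_mul ?size_XaddC ?sD // -size_poly_eq0 size_XaddC.
have sD2 : size D = n.+2.
  rewrite /D size_polyDl sD1 // size_polyN; exact: leq_trans sN _.
have D20 : D != 0 by rewrite -size_poly_eq0 sD2.
exists (a 1%N *: D'), D; split => //; split => //.
split; first by rewrite size_scale // sD.
split.
  rewrite coprimepZl // /D coprimep_addl_mul -scaleN1r coprimepZr ?oppr_eq0 ?oner_eq0 //.
  by rewrite coprimep_sym.
split.
  rewrite approxS eA -mul_polyC /D tofracM tofracB tofracM tofracD.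
  have D0' : D'%:F != 0 by rewrite tofrac_eq0.
  by rewrite frac_step.
have ev2 := root_ev archi (fun _ => True) D0.
have ev3 := root_ev archi (fun _ => True) D20.
apply: evW (evI ev' (evI ev2 ev3)) => z _ [e1 [d1 d2]].
rewrite /cf cfS -/(cf (sh a) (sh b) n z) e1 frac_step // hornerZ /D.
by rewrite !hornerE.
Qed.


Lemma approx_lrep n a b : (forall k, (0 < k)%N -> a k != 0) ->
  (size (lrep (approx a b n)).1 <= n)%N /\ size (lrep (approx a b n)).2 = n.+1.
Proof.
move=> ha; have [N [D [D0 [sD [sN [cND [eA _]]]]]]] := polyrep n b ha.
have l1 : lowest_rep (approx a b n) (N, D) by [].
have [s1 s2] := lowest_size (lrepP (approx a b n)) l1.
by rewrite s1 s2.
Qed.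

Lemma rdeg_approx n a b : (forall k, (0 < k)%N -> a k != 0) -> rdeg (approx a b n) = n.
Proof.
move=> ha; have [s1 s2] := approx_lrep n b ha.
by rewrite /rdeg s2 (maxn_idPr (leq_trans s1 (leqnSn n))).
Qed.

Lemma w_ev X n a b : (forall k, (0 < k)%N -> a k != 0) ->
  ev X (fun z => w a b n z = cf a b n z).
Proof.
move=> ha; have [N [D [D0 [sD [sN [cND [eA e1]]]]]]] := polyrep n b ha.
apply: evW (evI (reval_ev archi X D0 eA) (ev_sub X e1)) => z _ [e2 e3].
by rewrite /w e2 e3.
Qed.

Lemma lrep_size (r : RF) : (size (lrep r).1 <= (rdeg r).+1)%N /\ (size (lrep r).2 <= (rdeg r).+1)%N.
Proof.
rewrite /rdeg; split; apply: leq_trans (leqSpred _).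
  exact: leq_maxl. exact: leq_maxr.
Qed.

Lemma lower (n : nat) (p1 q1 p2 q2 : {poly C}) : q1 != 0 -> q2 != 0 ->
  (size q1 <= n.+1)%N -> (size q2 <= n.+1)%N -> p1 * q2 != p2 * q1 ->
  bigO (fun _ => True) (fun z => (z ^+ (2 * n))^-1) (fun z => p1.[z] / q1.[z] - p2.[z] / q2.[z]).
Proof.
move=> q10 q20 s1 s2 hne.
set P := p1 * q2 - p2 * q1; have P0 : P != 0 by rewrite subr_eq0.
set Q := q1 * q2; have Q0 : Q != 0 by rewrite mulf_neq0.
have eQ : ((size Q).-1 <= 2 * n)%N.
  rewrite /Q size_mul //.
  have h := leq_add s1 s2.
  rewrite -!subn1 -subnDA leq_subLR; apply: leq_trans h _.
  have -> : (n.+1 + n.+1 = 2 + 2 * n)%N by lia.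
  by [].
have H := asym_mul (growth archi P0) (asym_inv (growth archi Q0)).
set eP := (size P).-1 in H; set eQ' := (size Q).-1 in H eQ.
have lP : lead_coef P != 0 by rewrite lead_coef_eq0.
have lQ : lead_coef Q != 0 by rewrite lead_coef_eq0.
apply: bigO_trans _ (bigO_trans (asym_bigO (asym_sym H)) _); last first.
  apply: bigO_ev; apply: evW (evI (root_ev archi _ q10) (root_ev archi _ q20)) => z _ [z1 z2].
  rewrite /P /Q !hornerE; field; by rewrite z1 z2.
apply: (bigO_le (c := `|lead_coef Q| / `|lead_coef P|)).
  by rewrite divr_gt0 // normr_gt0.
apply: evW (ev_ge1 _) => z _ z1.
have z0 : 0 < `|z| by exact: lt_le_trans ltr01 z1.
have zQ : 0 < `|z| ^+ eQ' by rewrite exprn_gt0.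
rewrite normfV normrX normrM normfV !normrM !normrX.
have -> : `|lead_coef Q| / `|lead_coef P| * (`|lead_coef P| * `|z| ^+ eP *
   (`|lead_coef Q| * `|z| ^+ eQ')^-1) = `|z| ^+ eP / `|z| ^+ eQ'.
  by field; rewrite !normr_eq0 lP lQ (lt0r_neq0 zQ).
rewrite ler_pdivlMr // mulrC ler_pdivrMr ?exprn_gt0 //.
apply: le_trans (ler_weXn2l z1 eQ) _.
by rewrite ler_peMl ?exprn_ege1 // exprn_ge0 // ltW.
Qed.

Lemma no_bigO X k : unbounded X -> ~ bigO X (fun z => (z ^+ k)^-1) (fun z => (z ^+ k.+1)^-1).
Proof.
move=> hX [M [M0 [N h]]].
have [m hm] := archi M.
have [z [Xz /maxlt [hN hm']]] := hX (maxn N m).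
have := h z Xz hN.
have z0 : 0 < `|z| by exact: le_lt_trans (ler0n _ _) hN.
rewrite !normfV !normrX exprSr invfM mulrCA ler_pMr ?invr_gt0 ?exprn_gt0 //.
rewrite ler_pdivlMr // mul1r => hz.
rewrite -(gtr0_norm M0) in hz.
have : `|z| < `|z| by apply: le_lt_trans hz (lt_trans hm hm').
by rewrite ltxx.
Qed.

Lemma uniq_rat X n (p1 q1 p2 q2 : {poly C}) : unbounded X -> q1 != 0 -> q2 != 0 ->
  (size q1 <= n.+1)%N -> (size q2 <= n.+1)%N ->
  bigO X (fun z => p1.[z] / q1.[z] - p2.[z] / q2.[z]) (fun z => (z ^+ (2 * n).+1)^-1) ->
  p1 * q2 = p2 * q1.
Proof.
move=> hX q10 q20 s1 s2 H.
have [//|hne] := eqVneq (p1 * q2) (p2 * q1).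
exfalso; apply: (no_bigO hX (k := (2 * n)%N)).
exact: bigO_trans (bigO_sub _ (lower q10 q20 s1 s2 hne)) H.
Qed.

End Approx.

Section Main.
Variable C : numFieldType.
Variable archi : forall x : C, exists n : nat, `|x| < n%:R.
Local Notation RF := {fraction {poly C}}.
Variables (a b : nat -> C).
Hypothesis ha : forall n, (0 < n)%N -> a n != 0.
Implicit Types (X : C -> Prop) (f g h : C -> C).

Definition e n := fun z => w a b n.+1 z - w a b n z.

Lemma easym X n : asym X (e n) (fun z => piA a n.+1 / z ^+ (2 * n).+1).
Proof.
apply: asym_sub; apply: asym_ev (diff archi n a b) _ _; last by exists 0%N.
apply: evW (evI (w_ev archi _ n.+1 b ha) (w_ev archi _ n b ha)) => z _ [e1 e2].
by rewrite /e e1 e2.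
Qed.

Lemma eO X n : bigO X (e n) (fun z => (z ^+ (2 * n).+1)^-1).
Proof. exact: bigO_trans (asym_bigO (easym X n)) (bigO_cpow _ _ _). Qed.

Lemma eW X n : bigO X (fun z => (z ^+ (2 * n).+1)^-1) (e n).
Proof.
exact: bigO_trans (bigO_powc _ _ (pi_neq0 _ ha)) (asym_bigO (asym_sym (easym X n))).
Qed.

Lemma seq1 X : asym_seq1 X (fun n z => w a b n z - w a b n.-1 z).
Proof.
case=> // m _.
apply: littleo_bigO _ (eW X m).
apply: bigO_littleo (eO X m.+1) (littleo_pow archi _ _).
lia.
Qed.

Lemma part1 : (forall n, rdeg (approx a b n) = n) /\
   (forall n, (0 < n)%N ->
      asym (fun _ => True) (w a b n) (fun z => a 1%N / z) /\
      asym (fun _ => True) (fun z => w a b n z - w a b n.-1 z)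
           (fun z => (\prod_(1 <= i < n.+1) a i) / z ^+ (2 * n).-1)) /\
   asym_seq1 (fun _ => True) (fun n z => w a b n z - w a b n.-1 z).
Proof.
split; first by move=> n; exact: rdeg_approx.
split; last exact: seq1.
case=> // m _; split.
  apply: asym_ev (asym1 archi m a b) _ _; last by exists 0%N.
  apply: evW (w_ev archi _ m.+1 b ha) => z _ ->; done.
apply: asym_ev (easym _ m) _ _; first by exists 0%N.
exists 0%N => z _ _; congr (_ / _ ^+ _); lia.
Qed.


Definition condD X f := forall n, bigO X (fun z => f z - w a b n z) (fun z => (z ^+ (2 * n).+1)^-1).

Lemma step_down X f n : bigO X (fun z => f z - w a b n.+1 z) (fun z => (z ^+ (2 * n.+1).+1)^-1) ->
  bigO X (fun z => f z - w a b n z) (fun z => (z ^+ (2 * n).+1)^-1).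
Proof.
move=> h.
have h1 : bigO X (fun z => (z ^+ (2 * n.+1).+1)^-1) (fun z => (z ^+ (2 * n).+1)^-1).
  apply: bigO_pow; lia.
apply: bigO_trans (bigO_ev _) (bigOD (bigO_trans h h1) (eO X n)).
by exists 0%N => z _ _; rewrite /e addrA subrK.
Qed.

Lemma a_to_d X f : acf_expansion X f a b -> condD X f.
Proof. by move=> [_ h] n; apply: bigO_trans (h n) (eO X n). Qed.

Lemma d_to_a X f : condD X f -> acf_expansion X f a b.
Proof. by move=> h; split; [exact: seq1 | move=> n; exact: bigO_trans (h n) (eW X n)]. Qed.

Lemma e_to_d X f : (forall m, exists2 n, (m <= n)%N &
    bigO X (fun z => f z - w a b n z) (fun z => (z ^+ (2 * n).+1)^-1)) -> condD X f.
Proof.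
move=> h n; have [k nk hk] := h n.
have : forall j n, bigO X (fun z => f z - w a b (n + j) z) (fun z => (z ^+ (2 * (n + j)).+1)^-1) ->
    bigO X (fun z => f z - w a b n z) (fun z => (z ^+ (2 * n).+1)^-1).
  elim=> [|j IH] n'; first by rewrite addn0.
  by rewrite addnS -addSn => /IH; apply: step_down.
by move/(_ (k - n)%N n); rewrite (subnKC nk); apply.
Qed.

Lemma d_to_c X f : condD X f -> forall n, asym X (fun z => f z - w a b n z)
   (fun z => (\prod_(1 <= i < n.+2) a i) / z ^+ (2 * n).+1).
Proof.
move=> h m.
have h1 : littleo X (fun z => f z - w a b m.+1 z) (fun z => piA a m.+1 / z ^+ (2 * m).+1).
  apply: bigO_littleo (h m.+1) (littleo_bigO (littleo_pow archi _ _) (bigO_powc _ _ (pi_neq0 _ ha))).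
  lia.
apply: asym_ev (asym_addo (easym X m) h1) _ _; last by exists 0%N.
by exists 0%N => z _ _; rewrite /e addrC addrA subrK.
Qed.

Lemma c_to_d X f : (forall n, asym X (fun z => f z - w a b n z)
   (fun z => (\prod_(1 <= i < n.+2) a i) / z ^+ (2 * n).+1)) -> condD X f.
Proof. by move=> h n; apply: bigO_trans (asym_bigO (h n)) (bigO_cpow _ _ _). Qed.

Lemma b_to_d X f : (forall n, (0 < n)%N -> exists fn : C -> C,
   (forall z, X z -> f z = cfr a b 1 n (fn z) z) /\ asym X fn (fun z => a n.+1 / z)) -> condD X f.
Proof.
move=> h n; apply: step_down.
have [t [ht1 ht2]] := h n.+1 erefl.
apply: bigO_trans _ (bigO_trans (asym_bigO (b_to_c archi ht1 ht2)) (bigO_cpow _ _ _)).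
apply: bigO_ev; apply: evW (w_ev archi X n.+1 b ha) => z _ ->; done.
Qed.

Lemma cond_c_to_b X f : (forall n, asym X (fun z => f z - w a b n z)
   (fun z => (\prod_(1 <= i < n.+2) a i) / z ^+ (2 * n).+1)) ->
  forall n, (0 < n)%N -> exists fn : C -> C,
   (forall z, X z -> f z = cfr a b 1 n (fn z) z) /\ asym X fn (fun z => a n.+1 / z).
Proof.
move=> h n _; apply: (c_to_b archi n ha) => m.
apply: asym_ev (h m) _ _; last by exists 0%N.
apply: evW (w_ev archi X m b ha) => z _ ->; done.
Qed.

Lemma d_unique X f n r : unbounded X -> condD X f -> (rdeg r <= n)%N ->
  bigO X (fun z => f z - reval r z) (fun z => (z ^+ (2 * n).+1)^-1) -> r = approx a b n.
Proof.
move=> hX hd hr hO.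
have [q0 [_ er]] := lrepP r.
have [q0' [_ ea]] := lrepP (approx a b n).
have [_ s2] := lrep_size r.
have [_ s2'] := approx_lrep archi n b ha.
have H : bigO X (fun z => (lrep r).1.[z] / (lrep r).2.[z] -
                   (lrep (approx a b n)).1.[z] / (lrep (approx a b n)).2.[z])
              (fun z => (z ^+ (2 * n).+1)^-1).
  apply: bigO_trans (bigO_ev _) (bigOB (hd n) hO).
  by exists 0%N => z _ _; rewrite /w /reval; ring.
have := uniq_rat archi hX q0 q0' (leq_trans s2 (hr : ((rdeg r).+1 <= n.+1)%N)) _ H.
rewrite s2' => /(_ (leqnn _)) E.
by rewrite er ea; apply/frac_eq.
Qed.

Lemma d_to_f X f : unbounded X -> condD X f -> forall n,
  [/\ (rdeg (approx a b n) <= n)%N,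
      bigO X (fun z => f z - w a b n z) (fun z => (z ^+ (2 * n).+1)^-1) &
      forall r, (rdeg r <= n)%N ->
        bigO X (fun z => f z - reval r z) (fun z => (z ^+ (2 * n).+1)^-1) ->
        r = approx a b n].
Proof.
move=> hX hd n; split => //; first by rewrite rdeg_approx.
by move=> r; apply: d_unique.
Qed.

Lemma d_to_g X f : unbounded X -> condD X f -> forall n, (0 < n)%N -> is_pade X f n (approx a b n).
Proof.
move=> hX hd n _.
have [q0' [_ ea]] := lrepP (approx a b n).
have [s1 s2] := approx_lrep archi n b ha.
split.
  exists (lrep (approx a b n)).1, (lrep (approx a b n)).2; split => //.
  split; [exact: q0' | exact: s1 | by rewrite s2 | exact: hd n].
move=> g h [h0 sg sh hO].
have H : bigO X (fun z => g.[z] / h.[z] -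
                   (lrep (approx a b n)).1.[z] / (lrep (approx a b n)).2.[z])
              (fun z => (z ^+ (2 * n).+1)^-1).
  apply: bigO_trans (bigO_ev _) (bigOB (hd n) hO).
  by exists 0%N => z _ _; rewrite /w /reval; ring.
have := uniq_rat archi hX h0 q0' sh _ H.
rewrite s2 => /(_ (leqnn _)) E.
by rewrite ea; apply/frac_eq.
Qed.

Lemma g_to_d X f : (forall n, (0 < n)%N -> is_pade X f n (approx a b n)) -> condD X f.
Proof.
move=> hg n; apply: step_down.
have [[g [h [[h0 _ _ hO] E]]] _] := hg n.+1 erefl.
apply: bigO_trans (bigO_ev _) hO.
apply: evW (reval_ev archi X h0 E) => z _ E'.
by rewrite /w E'.
Qed.


Lemma part3 X f : unbounded X -> condD X f ->
  forall r, best_approx X f r <-> exists n, r = approx a b n.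
Proof.
move=> hX hd r; split; last first.
  move=> [n ->] v hv hO.
  have H := bigO_trans hO (hd n).
  rewrite (rdeg_approx archi n b ha) in hv.
  exact: (d_unique hX hd hv H).
move=> hb; exists (rdeg r); set n := rdeg r.
have [//|hne] := eqVneq r (approx a b n).
apply/esym; apply: hb; first by rewrite (rdeg_approx archi n b ha).
have [q0 [_ er]] := lrepP r.
have [q0' [_ ea]] := lrepP (approx a b n).
have [_ s2] := lrep_size r.
have [_ s2'] := approx_lrep archi n b ha.
have hne' : (lrep (approx a b n)).1 * (lrep r).2 != (lrep r).1 * (lrep (approx a b n)).2.
  apply: contraNneq hne => E; rewrite er ea; apply/eqP; apply/frac_eq => //; exact/esym.
have L := lower archi q0' q0 (eq_leq s2') s2 hne'.
have A : asym X (fun z => f z - reval r z) (fun z => w a b n z - reval r z).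
  apply: asym_of.
  have h1 := bigO_littleo (hd n) (littleo_bigO (littleo_pow archi X (ltnSn (2 * n))) (bigO_sub X L)).
  apply: littleo_norm h1 => z; congr (`|_|); ring.
apply: bigO_trans (hd n) (bigO_trans (bigO_pow X (leqnSn (2 * n))) _).
exact: bigO_trans (bigO_sub X L) (asym_bigO (asym_sym A)).
Qed.

End Main.

Theorem main_gen (C : numFieldType) (archi : forall x : C, exists n : nat, `|x| < n%:R)
  (a b : nat -> C) (ha : forall n, (0 < n)%N -> a n != 0) :
  ((forall n, rdeg (approx a b n) = n) /\
   (forall n, (0 < n)%N ->
      asym (fun _ => True) (w a b n) (fun z => a 1%N / z) /\
      asym (fun _ => True) (fun z => w a b n z - w a b n.-1 z)
           (fun z => (\prod_(1 <= i < n.+1) a i) / z ^+ (2 * n).-1)) /\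
   asym_seq1 (fun _ => True) (fun n z => w a b n z - w a b n.-1 z)) /\
  (forall (X : C -> Prop) (f : C -> C), unbounded X ->
   [<-> acf_expansion X f a b;
        forall n, (0 < n)%N -> exists fn : C -> C,
                    (forall z, X z -> f z = cfr a b 1 n (fn z) z) /\
                    asym X fn (fun z => a n.+1 / z);
        forall n, asym X (fun z => f z - w a b n z)
                    (fun z => (\prod_(1 <= i < n.+2) a i) / z ^+ (2 * n).+1);
        forall n, bigO X (fun z => f z - w a b n z)
                    (fun z => (z ^+ (2 * n).+1)^-1);
        forall m, exists2 n, (m <= n)%N &
                    bigO X (fun z => f z - w a b n z) (fun z => (z ^+ (2 * n).+1)^-1);
        forall n, [/\ (rdeg (approx a b n) <= n)%N,
                    bigO X (fun z => f z - w a b n z) (fun z => (z ^+ (2 * n).+1)^-1) &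
                    forall r, (rdeg r <= n)%N ->
                      bigO X (fun z => f z - reval r z) (fun z => (z ^+ (2 * n).+1)^-1) ->
                      r = approx a b n];
        forall n, (0 < n)%N -> is_pade X f n (approx a b n)] /\
   (acf_expansion X f a b ->
      forall r, best_approx X f r <-> exists n, r = approx a b n)).
Proof.
split; first exact: part1.
move=> X f hX; split; last first.
  move=> hA r; exact (part3 archi ha hX (a_to_d archi ha hA) r).
tfae.
- by move=> hA; exact (cond_c_to_b archi ha (d_to_c archi ha (a_to_d archi ha hA))).
- by move=> hB; exact (d_to_c archi ha (b_to_d archi ha hB)).
- by move=> hC n; apply: bigO_trans (asym_bigO (hC n)) (bigO_cpow _ _ _).
- by move=> hD m; exists m.
- by move=> hE; exact (d_to_f archi ha hX (e_to_d archi ha hE)).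
- by move=> hF; apply: (d_to_g archi ha hX) => n; case: (hF n).
- by move=> hG; exact (d_to_a archi ha (g_to_d archi ha hG)).
Qed.

Lemma archiC (R : realType) (x : R[i]) : exists n : nat, `|x| < n%:R.
Proof.
rewrite normc_def.
set s := Num.sqrt _.
have s0 : 0 <= s by exact: sqrtr_ge0.
exists (Num.bound s).
have := archi_boundP s0.
by rewrite -(ltcR (R:=R)) rmorph_nat.
Qed.

Theorem theorem4p1 (R : realType) (a b : nat -> R[i])
  (ha : forall n, (0 < n)%N -> a n != 0) :
  (* (1) *)
  ((forall n, rdeg (approx a b n) = n) /\
   (forall n, (0 < n)%N ->
      asym (fun _ => True) (w a b n) (fun z => a 1%N / z) /\
      asym (fun _ => True) (fun z => w a b n z - w a b n.-1 z)
           (fun z => (\prod_(1 <= i < n.+1) a i) / z ^+ (2 * n).-1)) /\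
   asym_seq1 (fun _ => True) (fun n z => w a b n z - w a b n.-1 z)) /\
  (forall (X : R[i] -> Prop) (f : R[i] -> R[i]), unbounded X ->
   (* (2) *)
   [<-> (* (a) *) acf_expansion X f a b;
        (* (b) *) forall n, (0 < n)%N -> exists fn : R[i] -> R[i],
                    (forall z, X z -> f z = cfr a b 1 n (fn z) z) /\
                    asym X fn (fun z => a n.+1 / z);
        (* (c) *) forall n, asym X (fun z => f z - w a b n z)
                    (fun z => (\prod_(1 <= i < n.+2) a i) / z ^+ (2 * n).+1);
        (* (d) *) forall n, bigO X (fun z => f z - w a b n z)
                    (fun z => (z ^+ (2 * n).+1)^-1);
        (* (e) *) forall m, exists2 n, (m <= n)%N &
                    bigO X (fun z => f z - w a b n z) (fun z => (z ^+ (2 * n).+1)^-1);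
        (* (f) *) forall n, [/\ (rdeg (approx a b n) <= n)%N,
                    bigO X (fun z => f z - w a b n z) (fun z => (z ^+ (2 * n).+1)^-1) &
                    forall r, (rdeg r <= n)%N ->
                      bigO X (fun z => f z - reval r z) (fun z => (z ^+ (2 * n).+1)^-1) ->
                      r = approx a b n];
        (* (g) *) forall n, (0 < n)%N -> is_pade X f n (approx a b n)] /\
   (* (3) *)
   (acf_expansion X f a b ->
      forall r, best_approx X f r <-> exists n, r = approx a b n)).
Proof.
exact (@main_gen _ (@archiC R) a b ha).
Qed.
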